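(* Let $E$ be a Banach lattice with an order continuous norm, let $A$ be an ideal in $E$, and let $\mathfrak{B}$ be the Boolean subalgebra of $\mathfrak{B}(E)$ generated by the order projections $\pi_x$, $x\in A$, where $\pi_x(z)=\sup\{z\wedge n|x|:n\in\mathbb{N}\}$. Suppose $T$ is $\mathfrak{B}$-Volterra, $0\le x_3\le x_2\le x_1$ in $A$, and $\{\pi_{x_1},\sigma,\rho\}$ is an antichain in $\mathfrak{B}$. Then $(\pi_{x_1}-\pi_{x_2})T\sigma x\perp(\pi_{x_2}-\pi_{x_3})T(\rho^*\sigma x+w)$ for every $x\in E$ and $w\in\pi_{x_1}^*(E)$. In particular, $(\pi_{x_1}-\pi_{x_2})T\sigma x\perp\pi_{x_2}T\rho^*\sigma x$ for every $x\in E$.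
   Context: $\mathfrak{B}(E)$ is the Boolean algebra of all order projections on $E$ ($\pi\le\rho$ iff $\pi\rho=\pi$, $\pi\wedge\rho=\pi\rho$, $\pi^*=I_E-\pi$, zero $\mathbf 0$, unit $\mathbf 1=I_E$). A positive operator $T$ is $\mathfrak{B}$-Volterra if for all $\pi\in\mathfrak{B}$ and $x,y\in E$, $\pi x=\pi y$ implies $\pi Tx=\pi Ty$. For $x\in E$, $\pi_x$ is the order projection onto the band generated by $x$, given on $z\in E^+$ by $\pi_x(z)=\sup\{z\wedge n|x|:n\in\mathbb{N}\}$. A nonempty subset of $\mathfrak{B}$ is an antichain if any two distinct elements have meet $\mathbf 0$. $u\perp v$ means $|u|\wedge|v|=0$. *)

(* Defs.v *)
From HB Require Import structures.
From mathcomp Require Import all_boot all_order all_algebra.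
From mathcomp Require Import all_classical all_reals all_analysis.
Set Implicit Arguments. Unset Strict Implicit. Unset Printing Implicit Defensive.
Import Order.TTheory GRing.Theory Num.Theory.
Local Open Scope ring_scope.

Record vector_lattice (R : realType) (E : lmodType R) := VectorLattice {
  vl_le : E -> E -> Prop;
  vl_sup : E -> E -> E;
  vl_inf : E -> E -> E;
  vl_refl : forall x, vl_le x x;
  vl_antisym : forall x y, vl_le x y -> vl_le y x -> x = y;
  vl_trans : forall x y z, vl_le x y -> vl_le y z -> vl_le x z;
  vl_add : forall x y z, vl_le x y -> vl_le (x + z) (y + z);
  vl_scale : forall (a : R) x y, 0 <= a -> vl_le x y -> vl_le (a *: x) (a *: y);
  vl_sup_l : forall x y, vl_le x (vl_sup x y);
  vl_sup_r : forall x y, vl_le y (vl_sup x y);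
  vl_sup_least : forall x y z, vl_le x z -> vl_le y z -> vl_le (vl_sup x y) z;
  vl_inf_l : forall x y, vl_le (vl_inf x y) x;
  vl_inf_r : forall x y, vl_le (vl_inf x y) y;
  vl_inf_greatest : forall x y z, vl_le z x -> vl_le z y -> vl_le z (vl_inf x y)
}.

Section VL.
Context {R : realType} {E : lmodType R} (L : vector_lattice E).

Definition vl_abs (x : E) : E := vl_sup L x (- x).

Definition vl_disjoint (u v : E) : Prop := vl_inf L (vl_abs u) (vl_abs v) = 0.

Definition vl_is_sup (S : set E) (s : E) : Prop :=
  (forall t, S t -> vl_le L t s) /\
  (forall u, (forall t, S t -> vl_le L t u) -> vl_le L s u).

Definition vl_is_inf (S : set E) (s : E) : Prop :=
  (forall t, S t -> vl_le L s t) /\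
  (forall u, (forall t, S t -> vl_le L u t) -> vl_le L u s).

Definition vl_ideal (A : set E) : Prop :=
  A 0 /\ (forall (a : R) x y, A x -> A y -> A (a *: x + y)) /\
  (forall x y, A x -> vl_le L (vl_abs y) (vl_abs x) -> A y).

Definition linear_op (P : E -> E) : Prop :=
  forall (a : R) x y, P (a *: x + y) = a *: P x + P y.

Definition positive_op (T : E -> E) : Prop :=
  linear_op T /\ (forall x, vl_le L 0 x -> vl_le L 0 (T x)).

(* Order projections: linear idempotent operators P with 0 <= P <= I
   (equivalently, band projections). *)
Definition order_projection (P : E -> E) : Prop :=
  linear_op P /\ (forall x, P (P x) = P x) /\
  (forall x, vl_le L 0 x -> vl_le L 0 (P x) /\ vl_le L (P x) x).

Definition proj_zero : E -> E := fun _ => 0.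
Definition proj_one : E -> E := fun x => x.
Definition proj_meet (P Q : E -> E) : E -> E := fun x => P (Q x).
Definition proj_compl (P : E -> E) : E -> E := fun x => x - P x.

Definition bool_subalgebra (S : set (E -> E)) : Prop :=
  (forall P, S P -> order_projection P) /\
  S proj_zero /\ S proj_one /\
  (forall P Q, S P -> S Q -> S (proj_meet P Q)) /\
  (forall P, S P -> S (proj_compl P)).

Definition generated_subalgebra (G : set (E -> E)) : set (E -> E) :=
  fun P => forall S, bool_subalgebra S -> (forall Q, G Q -> S Q) -> S P.

Definition volterra (B : set (E -> E)) (T : E -> E) : Prop :=
  forall pi, B pi -> forall x y, pi x = pi y -> pi (T x) = pi (T y).

Definition antichain (B : set (E -> E)) (C : set (E -> E)) : Prop :=
  (exists P, C P) /\ (forall P, C P -> B P) /\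
  (forall P Q, C P -> C Q -> P <> Q -> proj_meet P Q = proj_zero).

End VL.

Definition banach_lattice_norm {R : realType} {E : completeNormedModType R}
  (L : vector_lattice E) : Prop :=
  forall x y : E, vl_le L (vl_abs L x) (vl_abs L y) -> `|x| <= `|y|.

(* Order continuous norm: every downward directed set x_alpha of positive
   elements with infimum 0 satisfies ||x_alpha|| -> 0 (i.e. inf of norms = 0,
   the norm being monotone on positives). *)
Definition order_continuous_norm {R : realType} {E : completeNormedModType R}
  (L : vector_lattice E) : Prop :=
  forall S : set E, (exists s, S s) ->
    (forall s, S s -> vl_le L 0 s) ->
    (forall a b, S a -> S b -> exists c, S c /\ vl_le L c a /\ vl_le L c b) ->
    vl_is_inf L S 0 ->
    forall eps : R, 0 < eps -> exists s, S s /\ `|s| < eps.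

Definition is_band_proj_of {R : realType} {E : lmodType R}
  (L : vector_lattice E) (x : E) (P : E -> E) : Prop :=
  order_projection L P /\
  forall z, vl_le L 0 z ->
    vl_is_sup L [set vl_inf L z (n%:R *: vl_abs L x) | n in [set: nat]] (P z).

(* Main.v *)
Require Import Defs.
From mathcomp Require Import all_boot all_order all_algebra.
From mathcomp Require Import all_classical all_reals all_analysis.
From mathcomp Require Import ring lra.
Import GRing.Theory Num.Theory.
Local Open Scope ring_scope.

Section Aux.
Set Implicit Arguments.
Context {R : realType} {E : lmodType R} (L : vector_lattice E).
Local Notation le := (vl_le L).

Lemma lin0 P : @linear_op R E P -> P 0 = 0.
Proof.
move=> H; have h : P 0 = P 0 + P 0 by rewrite -{1}(addr0 0) -{1}(scale1r 0) H scale1r.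
by have := congr1 (fun t => t - P 0) h; rewrite addrK subrr => <-.
Qed.

Lemma linD P : @linear_op R E P -> forall x y, P (x + y) = P x + P y.
Proof. by move=> H x y; rewrite -{1}(scale1r x) H scale1r. Qed.

Lemma linN P : @linear_op R E P -> forall x, P (- x) = - P x.
Proof.
by move=> H x; rewrite -(addr0 (-x)) -scaleN1r H lin0 // addr0 scaleN1r.
Qed.

Lemma linB P : @linear_op R E P -> forall x y, P (x - y) = P x - P y.
Proof. by move=> H x y; rewrite linD // linN. Qed.

Lemma le_addl x y z : le x y -> le (z + x) (z + y).
Proof. by move=> h; rewrite ![z + _]addrC; apply: vl_add. Qed.

Lemma le_sub0 x y : le x y -> le 0 (y - x).
Proof. by move=> h; have := vl_add (- x) h; rewrite subrr. Qed.

Lemma le_of_sub x y : le 0 (y - x) -> le x y.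
Proof. by move=> h; have := vl_add x h; rewrite add0r subrK. Qed.

Lemma opp_le0 x : le 0 x -> le (- x) 0.
Proof. by move=> h; have := vl_add (- x) h; rewrite add0r subrr. Qed.

Lemma abs_ge0 a : le 0 (vl_abs L a).
Proof.
set s := vl_abs L a.
have h1 : le a s by apply: vl_sup_l.
have h2 : le (- a) s by apply: vl_sup_r.
have h3 : le 0 (s + s).
  apply: (vl_trans (y := s + - a)); first by rewrite -{1}(subrr a); exact: vl_add.
  exact: le_addl.
have hp : (0:R) <= 2^-1 by rewrite invr_ge0 ler0n.
have := vl_scale hp h3; rewrite scaler0 scalerDr -scalerDl.
have -> : (2^-1 + 2^-1 : R) = 1 by field.
by rewrite scale1r.
Qed.

Lemma mono P : @linear_op R E P -> (forall x, le 0 x -> le 0 (P x)) ->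
  forall x y, le x y -> le (P x) (P y).
Proof. by move=> H Hp x y /le_sub0 /Hp; rewrite linB // => /le_of_sub. Qed.

Lemma fixP P v w : order_projection L P -> le 0 w -> le w (P v) -> P w = w.
Proof.
move=> [Hl [Hi Hp]] h0 h1.
have hu : le 0 (P v - w) by exact: le_sub0.
have := (Hp _ hu).2; rewrite linB // Hi => /le_sub0.
have -> : P v - w - (P v - P w) = P w - w by rewrite opprB addrC addrA subrK.
move/le_of_sub => h2.
by apply: vl_antisym; [exact: (Hp _ h0).2 | exact: h2].
Qed.

Lemma decomp z : exists u v, [/\ le 0 u, le 0 v & z = u - v].
Proof.
exists (vl_sup L z 0), (vl_sup L z 0 - z); split.
- exact: vl_sup_r.
- exact/le_sub0/vl_sup_l.
- by rewrite opprB addrC subrK.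
Qed.

Lemma disj P Q : order_projection L P -> order_projection L Q ->
  (forall z, P (Q z) = 0) -> forall y y', vl_disjoint L (P y) (Q y').
Proof.
move=> hP hQ hPQ y y'; rewrite /vl_disjoint.
have absP : forall (S : E -> E) t, order_projection L S ->
    le (vl_abs L (S t)) (S (vl_abs L t)).
  move=> S t [Hl [Hi Hp]]; apply: vl_sup_least.
    by apply: (mono Hl (fun x h => (Hp x h).1)); exact: vl_sup_l.
  by rewrite -linN //; apply: (mono Hl (fun x h => (Hp x h).1)); exact: vl_sup_r.
set m := vl_inf L _ _.
have m0 : le 0 m by apply: vl_inf_greatest; exact: abs_ge0.
have e1 : P m = m.
  apply: (@fixP P (vl_abs L y) m hP m0).
  exact: vl_trans (vl_inf_l _ _ _) (absP _ _ hP).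
have e2 : Q m = m.
  apply: (@fixP Q (vl_abs L y') m hQ m0).
  exact: vl_trans (vl_inf_r _ _ _) (absP _ _ hQ).
by rewrite -e1 -e2 hPQ.
Qed.

Lemma comp_le P Q : order_projection L P -> order_projection L Q ->
  (forall z, le 0 z -> le (Q z) (P z)) ->
  (forall z, P (Q z) = Q z) /\ (forall z, Q (P z) = Q z).
Proof.
move=> hP hQ hle.
have [HlP [HiP HpP]] := hP; have [HlQ [HiQ HpQ]] := hQ.
have pos1 : forall u, le 0 u -> P (Q u) = Q u.
  move=> u hu; apply: (@fixP P u (Q u) hP); first exact: (HpQ _ hu).1.
  exact: hle.
have pos2 : forall u, le 0 u -> Q (P u) = Q u.
  move=> u hu.
  have hw : le 0 (u - P u) by exact/le_sub0/(HpP _ hu).2.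
  have h1 : le (Q (u - P u)) 0.
    by have := hle _ hw; rewrite [P (u - _)]linB // HiP subrr.
  have : Q (u - P u) = 0 by exact: (vl_antisym h1 (HpQ _ hw).1).
  by rewrite linB // => /eqP; rewrite subr_eq0 => /eqP.
split=> z; have [u [v [hu hv ->]]] := decomp z.
  by rewrite !linB // pos1 // pos1.
by rewrite !linB // pos2 // pos2.
Qed.

Lemma diff_op P Q : order_projection L P -> order_projection L Q ->
  (forall z, le 0 z -> le (Q z) (P z)) ->
  order_projection L (fun y => P y - Q y).
Proof.
move=> hP hQ hle; have [c1 c2] := comp_le hP hQ hle.
have [HlP [HiP HpP]] := hP; have [HlQ [HiQ HpQ]] := hQ.
split; [|split].
- move=> a x y /=; rewrite HlP HlQ scalerBr.
  by rewrite opprD addrACA.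
- move=> x /=; rewrite (linB HlP) (linB HlQ) HiP HiQ c1 c2; by rewrite subrr subr0.
- move=> z hz /=; split; first exact/le_sub0/hle.
  apply: (vl_trans (y := z - Q z)); first exact: vl_add (HpP _ hz).2.
  have := le_addl _ _ z (opp_le0 _ (HpQ _ hz).1); by rewrite addr0.
Qed.

Lemma abs_le x y : le 0 x -> le x y -> le (vl_abs L x) (vl_abs L y).
Proof.
move=> h0 h1; apply: vl_sup_least.
  exact: vl_trans h1 (vl_sup_l _ _ _).
apply: (vl_trans (opp_le0 _ h0)); exact: vl_trans h0 (vl_trans h1 (vl_sup_l _ _ _)).
Qed.

Lemma band_le x y P Q : le 0 x -> le x y -> is_band_proj_of L x Q ->
  is_band_proj_of L y P -> forall z, le 0 z -> le (Q z) (P z).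
Proof.
move=> h0 h1 [_ hQ] [_ hP] z hz.
apply: (hQ z hz).2 => t [n _ <-].
apply: (vl_trans (y := vl_inf L z (n%:R *: vl_abs L y))); last first.
  by apply: (hP z hz).1; exists n.
apply: vl_inf_greatest; first exact: vl_inf_l.
apply: (vl_trans (vl_inf_r _ _ _)).
apply: vl_scale; first by rewrite ler0n.
exact: abs_le.
Qed.

End Aux.
Arguments band_le {R E L} x y P Q.
Arguments diff_op {R E L} P Q.
Arguments comp_le {R E L} P Q.
Arguments disj {R E L} P Q.


Theorem proposition3p12 (R : realType) (E : completeNormedModType R)
  (L : vector_lattice E)
  (HBL : banach_lattice_norm L) (HOC : order_continuous_norm L)
  (A : set E) (HA : vl_ideal L A)
  (pi : E -> E -> E) (Hpi : forall x, A x -> is_band_proj_of L x (pi x))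
  (T : E -> E) (HT : positive_op L T)
  (HV : volterra (generated_subalgebra L [set pi x | x in A]) T)
  (x1 x2 x3 : E) (Hx1 : A x1) (Hx2 : A x2) (Hx3 : A x3)
  (H03 : vl_le L 0 x3) (H32 : vl_le L x3 x2) (H21 : vl_le L x2 x1)
  (sigma rho : E -> E)
  (Hanti : antichain (generated_subalgebra L [set pi x | x in A])
             [set pi x1; sigma; rho]) :
  (forall x w : E, (exists z, w = proj_compl (pi x1) z) ->
     vl_disjoint L (pi x1 (T (sigma x)) - pi x2 (T (sigma x)))
       (pi x2 (T (proj_compl rho (sigma x) + w))
        - pi x3 (T (proj_compl rho (sigma x) + w)))) /\
  (forall x : E,
     vl_disjoint L (pi x1 (T (sigma x)) - pi x2 (T (sigma x)))
       (pi x2 (T (proj_compl rho (sigma x))))).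
Proof.
have H02 : vl_le L 0 x2 by exact: (vl_trans H03 H32).
have H31 : vl_le L x3 x1 by exact: (vl_trans H32 H21).
have [op1 _] := Hpi _ Hx1; have [op2 _] := Hpi _ Hx2; have [op3 _] := Hpi _ Hx3.
have l21 := band_le _ _ _ _ H02 H21 (Hpi _ Hx2) (Hpi _ Hx1).
have l32 := band_le _ _ _ _ H03 H32 (Hpi _ Hx3) (Hpi _ Hx2).
have l31 := band_le _ _ _ _ H03 H31 (Hpi _ Hx3) (Hpi _ Hx1).
have [c12 c21] := comp_le _ _ op1 op2 l21.
have [c23 c32] := comp_le _ _ op2 op3 l32.
have [c13 c31] := comp_le _ _ op1 op3 l31.
have d12 := diff_op _ _ op1 op2 l21.
have d23 := diff_op _ _ op2 op3 l32.
have [HlQ [HiQ _]] := op2.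
split.
  move=> x w _.
  apply: (disj _ _ d12 d23) => z /=.
  have [HlP _] := op1.
  by rewrite (linB HlQ) (linB HlP) c12 c13 c23 HiQ subrr.
move=> x; apply: (disj _ _ d12 op2) => z /=.
by rewrite c12 HiQ subrr.
Qed.
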